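(* Consider Algorithm NCB run with inputs $k\ge2$ and $T$ on an instance with $\mu^*\ge\frac{32\sqrt{k\log k\log T}}{\sqrt T}$, and let $i^*$ be an arm with $\mu_{i^*}=\mu^*$. On the event $G$, for every round $t>\widetilde T$ (i.e. every round of Phase II), the Nash confidence bound of $i^*$ at round $t$ satisfies $\mathrm{NCB}_{i^*,t}\ge\mu^*$.
   Context: Bandit setup: $k$ arms, arm $i$ a distribution on $[0,1]$ with mean $\mu_i$, $\mu^*:=\max_i\mu_i$. $\log$ is the natural logarithm. Canonical model: a $k\times T$ table $(Y_{i,s})$ of independent entries with $Y_{i,s}$ distributed as arm $i$; the $s$-th pull of arm $i$ yields $Y_{i,s}$. Let $\widehat\mu_{i,s}:=\frac1s\sum_{r=1}^sY_{i,r}$. Algorithm NCB (inputs $k,T$): $\widetilde T:=16\sqrt{\frac{kT\log T}{\log k}}$. Phase I: in each round $t\le\widetilde T$ pull a uniformly random arm. Phase II: in each round $\widetilde T<t\le T$ pull an arm maximizing $\mathrm{NCB}_i:=\widehat\mu_i+4\sqrt{\widehat\mu_i\log T/n_i}$, where $n_i$ is the number of pulls of $i$ before the round and $\widehat\mu_i$ its empirical mean (ties arbitrary); $\mathrm{NCB}_{i,t}$ denotes this value at round $t$. Events: $G_1$: every arm is pulled at least $\frac{\widetilde T}{2k}$ times in Phase I. $G_2$: for every arm $i$ with $\mu_i>\frac{6\sqrt{k\log k\log T}}{\sqrt T}$ and every integer $s$ with $\frac{\widetilde T}{2k}\le s\le T$, $|\mu_i-\widehat\mu_{i,s}|\le 3\sqrt{\frac{\mu_i\log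 T}{s}}$. $G_3$: for every arm $j$ with $\mu_j\le\frac{6\sqrt{k\log k\log T}}{\sqrt T}$ and every integer $s$ with $\frac{\widetilde T}{2k}\le s\le T$, $\widehat\mu_{j,s}\le \frac{9\sqrt{k\log k\log T}}{\sqrt T}$. $G:=G_1\cap G_2\cap G_3$. *)

(* Defs.v *)
From mathcomp Require Import all_boot all_order all_algebra.
From mathcomp Require Import all_classical all_reals all_analysis.
Set Implicit Arguments. Unset Strict Implicit. Unset Printing Implicit Defensive.
Import Order.TTheory GRing.Theory Num.Theory.
Local Open Scope ring_scope.

Section NCB.
Variable R : realType.

Definition mustar (k : nat) (mu : 'I_k -> R) : R := \big[Num.max/0]_(i < k) mu i.

Definition Ttilde (k T : nat) : R :=
  16 * Num.sqrt (k%:R * T%:R * ln (T%:R : R) / ln (k%:R : R)).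

Definition thr (k T : nat) : R :=
  Num.sqrt (k%:R * ln (k%:R : R) * ln (T%:R : R)) / Num.sqrt (T%:R).

(* canonical model: Y i s is the s-th pull (s >= 1) of arm i;
   muhat_s Y i s = (1/s) sum_{r=1}^s Y i r *)
Definition muhat_s (k : nat) (Y : 'I_k -> nat -> R) (i : 'I_k) (s : nat) : R :=
  (\sum_(1 <= r < s.+1) Y i r) / s%:R.

(* a t = arm pulled at round t (t >= 1);
   npulls a i t = number of pulls of i before round t *)
Definition npulls (k : nat) (a : nat -> 'I_k) (i : 'I_k) (t : nat) : nat :=
  \sum_(1 <= r < t) (a r == i).

Definition NCB (k T : nat) (Y : 'I_k -> nat -> R) (a : nat -> 'I_k)
    (i : 'I_k) (t : nat) : R :=
  let n := npulls a i t in
  let m := muhat_s Y i n in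
  m + 4 * Num.sqrt (m * ln (T%:R : R) / n%:R).

Definition ncb_run (k T : nat) (Y : 'I_k -> nat -> R) (a : nat -> 'I_k) : Prop :=
  forall t : nat, Ttilde k T < t%:R -> (t <= T)%N ->
    forall j : 'I_k, NCB T Y a j t <= NCB T Y a (a t) t.

Definition G1 (k T : nat) (a : nat -> 'I_k) : Prop :=
  forall i : 'I_k,
    Ttilde k T / (2 * k%:R) <=
      (\sum_(1 <= r < T.+1 | (r%:R <= Ttilde k T :> R)) (a r == i))%:R.

Definition G2 (k T : nat) (mu : 'I_k -> R) (Y : 'I_k -> nat -> R) : Prop :=
  forall i : 'I_k, 6 * thr k T < mu i ->
    forall s : nat, Ttilde k T / (2 * k%:R) <= s%:R -> (s <= T)%N ->
      `|mu i - muhat_s Y i s| <= 3 * Num.sqrt (mu i * ln (T%:R : R) / s%:R).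

Definition G3 (k T : nat) (mu : 'I_k -> R) (Y : 'I_k -> nat -> R) : Prop :=
  forall j : 'I_k, mu j <= 6 * thr k T ->
    forall s : nat, Ttilde k T / (2 * k%:R) <= s%:R -> (s <= T)%N ->
      muhat_s Y j s <= 9 * thr k T.

Definition eventG (k T : nat) (mu : 'I_k -> R) (Y : 'I_k -> nat -> R)
    (a : nat -> 'I_k) : Prop :=
  G1 T a /\ G2 T mu Y /\ G3 T mu Y.

End NCB.

(* Main.v *)
Require Import Defs.
From mathcomp Require Import all_boot all_order all_algebra.
From mathcomp Require Import all_classical all_reals all_analysis.
From mathcomp Require Import ring lra.
Import Order.TTheory GRing.Theory Num.Theory.
Local Open Scope ring_scope.

Lemma cnt_le (k T t : nat) (R : realType) (a : nat -> 'I_k) (i : 'I_k) :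
  (t <= T)%N -> Ttilde R k T < t%:R ->
  (\sum_(1 <= r < T.+1 | (r%:R <= Ttilde R k T :> R)) (a r == i) <= npulls a i t)%N.
Proof.
move=> tT Ht; rewrite /npulls (@big_nat_widen _ _ _ 1 t T.+1); last exact: leqW.
rewrite big_mkcond [X in (_ <= X)%N]big_mkcond /=.
apply: leq_sum => r _.
case: ifP => // Hr.
have -> : (r < t)%N.
  have : (r%:R : R) < t%:R by apply: (le_lt_trans Hr).
  by rewrite ltr_nat.
by [].
Qed.

Theorem lemma2 (R : realType) (k T : nat) (mu : 'I_k -> R)
    (Y : 'I_k -> nat -> R) (a : nat -> 'I_k) (istar : 'I_k) :
  (2 <= k)%N ->
  (forall i, 0 <= mu i <= 1) ->
  (forall i s, 0 <= Y i s <= 1) ->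
  32 * thr R k T <= mustar mu ->
  mu istar = mustar mu ->
  ncb_run T Y a ->
  eventG T mu Y a ->
  forall t : nat, Ttilde R k T < t%:R -> (t <= T)%N ->
    mustar mu <= NCB T Y a istar t.
Proof.
move=> k2 Hmu HY H32 Hstar _ [G1 [G2 _]] t Ht tT.
set n := npulls a istar t.
set m := muhat_s Y istar n.
set L := ln (T%:R : R).
have m0 : 0 <= m.
  rewrite /m /muhat_s divr_ge0 //; apply: sumr_ge0 => r _.
  by case/andP: (HY istar r).
rewrite /NCB /= -/n -/m -/L.
have thr0 : 0 <= thr R k T by rewrite /thr divr_ge0 ?sqrtr_ge0.
have mu0 : 0 <= mu istar by case/andP: (Hmu istar).
have [mz|mpos] := eqVneq (mustar mu) 0.
  rewrite mz; apply: addr_ge0 => //; apply: mulr_ge0 => //; exact: sqrtr_ge0.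
have mp : 0 < mustar mu by rewrite lt0r mpos -Hstar.
have T0 : (0 < T)%N.
  have Tt0 : 0 <= Ttilde R k T by rewrite /Ttilde mulr_ge0 ?sqrtr_ge0.
  have : (0 : R) < t%:R by apply: (le_lt_trans Tt0).
  rewrite ltr0n => /leq_trans; exact.
have L0 : 0 <= L by rewrite /L ln_ge0 // ler1n.
have lk0 : 0 < ln (k%:R : R) by rewrite ln_gt0 // ltr1n.
have nge : Ttilde R k T / (2 * k%:R) <= n%:R.
  apply: (le_trans (G1 istar)); rewrite ler_nat; exact: cnt_le.
have key : L / n%:R <= thr R k T / 8.
  have [n0|npos] := eqVneq n 0%N.
    by rewrite n0 invr0 mulr0 divr_ge0.
  have nR : 0 < (n%:R : R) by rewrite ltr0n lt0n.
  have kR : 0 < (k%:R : R) by rewrite ltr0n; apply: leq_trans k2.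
  have TR : 0 < (T%:R : R) by rewrite ltr0n.
  have hprod : Ttilde R k T * thr R k T = 16 * k%:R * L.
    rewrite /Ttilde /thr -/L.
    have sT : 0 < Num.sqrt (T%:R : R) by rewrite sqrtr_gt0.
    have hxy : Num.sqrt (k%:R * T%:R * L / ln (k%:R : R)) * Num.sqrt (k%:R * ln (k%:R:R) * L)
        = k%:R * L * Num.sqrt (T%:R : R).
      rewrite -sqrtrM; last by rewrite divr_ge0 ?mulr_ge0 // ltW.
      have -> : k%:R * T%:R * L / ln (k%:R:R) * (k%:R * ln (k%:R:R) * L)
          = (k%:R * L) ^+ 2 * T%:R.
        by field; rewrite ?gt_eqF.
      rewrite sqrtrM ?sqr_ge0 // sqrtr_sqr ger0_norm // mulr_ge0 // ltW //.
    transitivity (16 * (Num.sqrt (k%:R * T%:R * L / ln (k%:R : R)) * Num.sqrt (k%:R * ln (k%:R:R) * L)) / Num.sqrt (T%:R : R)).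
      by rewrite !mulrA.
    by rewrite hxy; field; rewrite ?gt_eqF.
  have h1 : Ttilde R k T / (2 * k%:R) * thr R k T <= n%:R * thr R k T.
    by apply: ler_wpM2r.
  have h2 : Ttilde R k T / (2 * k%:R) * thr R k T = 8 * L.
    by rewrite mulrAC hprod; field; rewrite ?gt_eqF.
  rewrite ler_pdivrMr // ; rewrite h2 in h1; lra.
set P := L / n%:R.
have P0 : 0 <= P by rewrite /P divr_ge0.
have Hsmu : 6 * thr R k T < mu istar by rewrite Hstar; lra.
have tT0 : (n <= T)%N.
  apply: (leq_trans _ tT); rewrite /n /npulls.
  apply: (@leq_trans (\sum_(1 <= r < t) 1)%N).
    by apply: leq_sum => r _; exact: leq_b1.
  rewrite sum_nat_const_nat muln1; exact: leq_subr.
have G := G2 istar Hsmu n nge tT0.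
rewrite -/m -/L -Hstar in G H32 mp *.
rewrite -mulrA -/P in G; rewrite -mulrA -/P.
set M := mu istar in G Hsmu mu0 H32 mp *.
set sq := Num.sqrt (M * P) in G.
set q := Num.sqrt (m * P).
have sq0 : 0 <= sq by exact: sqrtr_ge0.
have q0 : 0 <= q by exact: sqrtr_ge0.
have sq2 : sq ^+ 2 = M * P by rewrite sqr_sqrtr // mulr_ge0.
have q2 : q ^+ 2 = m * P by rewrite sqr_sqrtr // mulr_ge0.
have PM : P <= M / 256 by rewrite /P; lra.
have [G' G''] : M - m <= 3 * sq /\ m - M <= 3 * sq.
  by move: G; rewrite ler_norml; case/andP => g1 g2; split; lra.
have sqM : sq <= M / 16.
  have : sq ^+ 2 <= (M / 16) ^+ 2.
    rewrite sq2; have : M * P <= M * (M / 256) by apply: ler_wpM2l => //; lra.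
    rewrite expr2; lra.
  rewrite !expr2 => h; nra.
have mge : 13 / 16 * M <= m by lra.
have qs : 3 / 4 * sq <= q.
  have : (3 / 4 * sq) ^+ 2 <= q ^+ 2.
    rewrite q2 exprMn sq2.
    have : 13 / 16 * M * P <= m * P by apply: ler_wpM2r.
    have : 0 <= M * P by rewrite mulr_ge0.
    rewrite expr2; lra.
  rewrite !expr2 => h; nra.

lra.
Qed.
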